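(* Let $a,b\in\mathbb{C}$ with $\Re(b)>0$, $\Re(b+a)>0$, $\Re(b-a)>0$, $\frac32\pm\frac{a}{2b}\notin\mathbb{Z}_0^-$ and $\frac ab\notin\{\pm1,\pm3,\pm5,\dots\}$. Then $$ {}_4F_3\!\left(\begin{matrix}2,\ 2,\ \frac12+\frac{a}{2b},\ \frac12-\frac{a}{2b}\\ 1,\ \frac52+\frac{a}{2b},\ \frac52-\frac{a}{2b}\end{matrix};\,1\right) =\frac{9b^2-a^2}{8b^2}\;{}_3F_2\!\left(\begin{matrix}1,\ \frac12-\frac{a}{2b},\ \frac12+\frac{a}{2b}\\ \frac32-\frac{a}{2b},\ \frac32+\frac{a}{2b}\end{matrix};\,1\right). $$
   Context: $\mathbb{Z}_0^-=\{0,-1,-2,\dots\}$. The Pochhammer symbol is $(\lambda)_0=1$, $(\lambda)_n=\lambda(\lambda+1)\cdots(\lambda+n-1)$ for $n\ge1$. The generalized hypergeometric series is ${}_pF_q\!\left(\begin{matrix}\alpha_1,\dots,\alpha_p\\ \beta_1,\dots,\beta_q\end{matrix};z\right)=\sum_{n=0}^\infty\frac{(\alpha_1)_n\cdots(\alpha_p)_n}{(\beta_1)_n\cdots(\beta_q)_n}\frac{z^n}{n!}$ (with no $\beta_j\in\mathbb{Z}_0^-$). *)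

(* Defs.v *)
From Stdlib Require Import Reals ZArith List.
Import ListNotations.
Open Scope R_scope.

Record Cx : Type := mkC { Re : R ; Im : R }.

Definition RtoC (x : R) : Cx := mkC x 0.
Definition Cadd (z w : Cx) : Cx := mkC (Re z + Re w) (Im z + Im w).
Definition Copp (z : Cx) : Cx := mkC (- Re z) (- Im z).
Definition Csub (z w : Cx) : Cx := Cadd z (Copp w).
Definition Cmul (z w : Cx) : Cx :=
  mkC (Re z * Re w - Im z * Im w) (Re z * Im w + Im z * Re w).
Definition Cinv (z : Cx) : Cx :=
  mkC (Re z / (Re z * Re z + Im z * Im z))
      (- Im z / (Re z * Re z + Im z * Im z)).
Definition Cdiv (z w : Cx) : Cx := Cmul z (Cinv w).

Fixpoint Cpow (z : Cx) (n : nat) : Cx :=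
  match n with O => RtoC 1 | S m => Cmul z (Cpow z m) end.

Fixpoint poch (l : Cx) (n : nat) : Cx :=
  match n with
  | O => RtoC 1
  | S m => Cmul (poch l m) (Cadd l (RtoC (INR m)))
  end.

Definition prod_poch (ls : list Cx) (n : nat) : Cx :=
  fold_right (fun l acc => Cmul (poch l n) acc) (RtoC 1) ls.

Definition hyp_term (alphas betas : list Cx) (z : Cx) (n : nat) : Cx :=
  Cdiv (Cmul (Cdiv (prod_poch alphas n) (prod_poch betas n)) (Cpow z n))
       (RtoC (INR (fact n))).

Fixpoint Cpartial (f : nat -> Cx) (n : nat) : Cx :=
  match n with O => RtoC 0 | S m => Cadd (Cpartial f m) (f m) end.

Definition Cseries_to (f : nat -> Cx) (l : Cx) : Prop :=
  Un_cv (fun n => Re (Cpartial f n)) (Re l) /\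
  Un_cv (fun n => Im (Cpartial f n)) (Im l).

Definition pFq_sum (alphas betas : list Cx) (z s : Cx) : Prop :=
  Cseries_to (hyp_term alphas betas z) s.

(* Main.v *)
From Stdlib Require Import Reals ZArith List Lia Lra.
From Coquelicot Require Import Coquelicot.
Require Import Defs.
Import ListNotations.
Open Scope R_scope.

Notation CC := Complex.C.
Local Notation RC := Complex.RtoC.

Definition toC (z : Cx) : CC := (Re z, Im z).
Definition ofC (z : CC) : Cx := mkC (fst z) (snd z).

Lemma toC_ofC z : toC (ofC z) = z. Proof. destruct z; reflexivity. Qed.
Lemma toC_add z w : toC (Cadd z w) = (toC z + toC w)%C. Proof. reflexivity. Qed.
Lemma toC_mul z w : toC (Cmul z w) = (toC z * toC w)%C. Proof. reflexivity. Qed.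
Lemma toC_opp z : toC (Copp z) = (- toC z)%C. Proof. reflexivity. Qed.
Lemma toC_sub z w : toC (Csub z w) = (toC z - toC w)%C. Proof. reflexivity. Qed.
Lemma toC_RtoC x : toC (RtoC x) = RC x. Proof. reflexivity. Qed.
Lemma toC_inv z : toC (Cinv z) = (/ toC z)%C.
Proof. unfold toC, Cinv, Complex.Cinv; simpl. f_equal; f_equal; ring. Qed.
Lemma toC_div z w : toC (Cdiv z w) = (toC z / toC w)%C.
Proof. unfold Cdiv. rewrite toC_mul, toC_inv. reflexivity. Qed.
Lemma toC_inj z w : toC z = toC w -> z = w.
Proof. destruct z, w; unfold toC; simpl; intros H; injection H; intros; subst; reflexivity. Qed.

Fixpoint cpoch (l : CC) (n : nat) : CC :=
  match n with O => RC 1 | S m => (cpoch l m * (l + RC (INR m)))%C end.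

Lemma toC_poch l n : toC (poch l n) = cpoch (toC l) n.
Proof. induction n; cbn [poch cpoch]. reflexivity. rewrite toC_mul, toC_add, IHn. reflexivity. Qed.

Lemma toC_prod_cons l ls n : toC (prod_poch (l :: ls) n) = (cpoch (toC l) n * toC (prod_poch ls n))%C.
Proof. unfold prod_poch; cbn [fold_right]. rewrite toC_mul, toC_poch. reflexivity. Qed.
Lemma toC_prod_nil n : toC (prod_poch [] n) = RC 1.
Proof. reflexivity. Qed.

Lemma toC_pow1 n : toC (Cpow (RtoC 1) n) = RC 1.
Proof. induction n; cbn [Cpow]. reflexivity. rewrite toC_mul, IHn, toC_RtoC. ring. Qed.

Lemma cpoch1_fact n : cpoch (RC 1) n = RC (INR (fact n)).
Proof. induction n; cbn [cpoch]. reflexivity.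
  change (fact (S n)) with (S n * fact n)%nat. rewrite mult_INR, S_INR, IHn, !RtoC_mult, RtoC_plus. ring. Qed.

Lemma toC_hyp al bl n : toC (hyp_term al bl (RtoC 1) n) =
  (toC (prod_poch al n) / toC (prod_poch bl n) / cpoch (RC 1) n)%C.
Proof. unfold hyp_term. rewrite !toC_div, toC_mul, toC_div, toC_pow1, toC_RtoC, <- cpoch1_fact.
  rewrite Cmult_1_r. reflexivity. Qed.

Open Scope C_scope.

Lemma cpoch_shift x y n : y = x + RC 1 -> cpoch x n * (x + RC (INR n)) = x * cpoch y n.
Proof. intros ->. induction n. cbn. ring. cbn [cpoch]. rewrite S_INR, RtoC_plus.
  replace (x * (cpoch (x + RC 1) n * (x + RC 1 + RC (INR n))))
   with ((x * cpoch (x + RC 1) n) * (x + RC 1 + RC (INR n))) by ring.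
  rewrite <- IHn. ring. Qed.

Lemma cpoch_nz x n : (forall k, x + RC (INR k) <> 0) -> cpoch x n <> 0.
Proof. intros H; induction n; cbn [cpoch]. apply C1_nz. apply Cmult_neq_0; auto. Qed.

Lemma shift_nz x y : y = x + RC 1 -> (forall k, x + RC (INR k) <> 0) -> (forall k, y + RC (INR k) <> 0).
Proof. intros -> H k E. apply (H (S k)). rewrite S_INR, RtoC_plus. rewrite <- E. ring. Qed.

Lemma ratio1 x y n : y = x + RC 1 -> (forall k, x + RC (INR k) <> 0) ->
  cpoch x n = x * cpoch y n / (x + RC (INR n)).
Proof. intros Hy H. rewrite <- (cpoch_shift x y n Hy). field. auto. Qed.

Lemma ratio2 x y z n : y = x + RC 1 -> z = y + RC 1 -> (forall k, x + RC (INR k) <> 0) ->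
  cpoch x n = x * y * cpoch z n / ((x + RC (INR n)) * (y + RC (INR n))).
Proof. intros Hy Hz H. rewrite (ratio1 x y n Hy H). rewrite (ratio1 y z n Hz (shift_nz x y Hy H)).
  field. split; auto. apply (shift_nz x y Hy H). Qed.
Close Scope C_scope.
Open Scope C_scope.
Definition nz (x : CC) := forall k, x + RC (INR k) <> 0.

Lemma one_nz : nz (RC 1).
Proof. intros k E. rewrite <- RtoC_plus in E. apply RtoC_inj in E. pose proof (pos_INR k). lra. Qed.

Lemma nz_shift x : nz x -> forall n, x + RC 1 + RC (INR n) <> 0.
Proof. intros H n. apply (shift_nz x (x + RC 1)); auto. Qed.

Lemma t3_form u v w1 w2 n : w1 = u + RC 1 -> w2 = v + RC 1 -> nz u -> nz v ->
  cpoch (RC 1) n * (cpoch u n * (cpoch v n * RC 1)) / (cpoch w1 n * (cpoch w2 n * RC 1)) / cpoch (RC 1) n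
  = u * v / ((u + RC (INR n)) * (v + RC (INR n))).
Proof. intros H1 H2 Hu Hv.
  rewrite (ratio1 u w1 n H1 Hu), (ratio1 v w2 n H2 Hv).
  pose proof (cpoch_nz _ n (shift_nz _ _ H1 Hu)). pose proof (cpoch_nz _ n (shift_nz _ _ H2 Hv)).
  pose proof (cpoch_nz _ n one_nz). field. repeat split; auto. Qed.

Lemma t4_form u v z1 z2 n : z1 = u + RC 2 -> z2 = v + RC 2 -> nz u -> nz v ->
  cpoch (RC 2) n * (cpoch (RC 2) n * (cpoch v n * (cpoch u n * RC 1))) / (cpoch (RC 1) n * (cpoch z2 n * (cpoch z1 n * RC 1))) / cpoch (RC 1) n
  = (RC 1 + RC (INR n)) * (RC 1 + RC (INR n)) * u * (u + RC 1) * v * (v + RC 1) /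
     ((u + RC (INR n)) * (u + RC 1 + RC (INR n)) * (v + RC (INR n)) * (v + RC 1 + RC (INR n))).
Proof. intros H1 H2 Hu Hv.
  assert (E2 : cpoch (RC 2) n = cpoch (RC 1) n * (RC 1 + RC (INR n))).
  { rewrite (cpoch_shift (RC 1) (RC 2) n); ring. }
  rewrite E2.
  assert (Z1 : z1 = u + RC 1 + RC 1) by (rewrite H1, <- Cplus_assoc, <- RtoC_plus; f_equal; f_equal; ring).
  assert (Z2 : z2 = v + RC 1 + RC 1) by (rewrite H2, <- Cplus_assoc, <- RtoC_plus; f_equal; f_equal; ring).
  rewrite (ratio2 u (u + RC 1) z1 n eq_refl Z1 Hu), (ratio2 v (v + RC 1) z2 n eq_refl Z2 Hv).
  pose proof (cpoch_nz _ n (shift_nz _ _ Z1 (shift_nz _ _ eq_refl Hu))).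
  pose proof (cpoch_nz _ n (shift_nz _ _ Z2 (shift_nz _ _ eq_refl Hv))).
  pose proof (cpoch_nz _ n one_nz). pose proof (nz_shift u Hu n). pose proof (nz_shift v Hv n).
  pose proof (Hu n). pose proof (Hv n). field. repeat split; auto. Qed.

Fixpoint psum (f : nat -> CC) (n : nat) : CC :=
  match n with O => RC 0 | S m => psum f m + f m end.

Definition t3f (u : CC) (n : nat) : CC :=
  u * (RC 1 - u) / ((u + RC (INR n)) * ((RC 1 - u) + RC (INR n))).
Definition t4f (u : CC) (n : nat) : CC :=
  let v := RC 1 - u in
  (RC 1 + RC (INR n)) * (RC 1 + RC (INR n)) * u * (u + RC 1) * v * (v + RC 1) /
     ((u + RC (INR n)) * (u + RC 1 + RC (INR n)) * (v + RC (INR n)) * (v + RC 1 + RC (INR n))).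
Definition Kc (u : CC) : CC := (u + RC 1) * (RC 1 - u + RC 1) / RC 2.

Lemma telesc u n : nz u -> nz (RC 1 - u) ->
  psum (t4f u) n = Kc u * psum (t3f u) n
     - Kc u * (u * (RC 1 - u) * RC (INR n) / ((u + RC (INR n)) * ((RC 1 - u) + RC (INR n)))).
Proof. intros Hu Hv. induction n.
  - assert (u <> 0) by (intro E; apply (Hu 0%nat); rewrite E; simpl INR; ring).
    assert (RC 1 - u <> 0) by (intro E; apply (Hv 0%nat); rewrite E; simpl INR; ring).
    cbn. unfold Kc. field. repeat split; auto.
  - cbn [psum]. rewrite IHn. unfold t4f, t3f, Kc.
    pose proof (Hu n). pose proof (Hv n). pose proof (nz_shift u Hu n). pose proof (nz_shift _ Hv n).
    rewrite S_INR, RtoC_plus.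
    assert (u + (RC (INR n) + RC 1) <> 0) by (rewrite (Cplus_comm (RC (INR n))), Cplus_assoc; auto).
    assert (RC 1 - u + (RC (INR n) + RC 1) <> 0) by (rewrite (Cplus_comm (RC (INR n))), Cplus_assoc; auto).
    field. repeat split; auto. Qed.
Close Scope C_scope.

Lemma modlow (x : CC) n : INR n - Cmod x <= Cmod (x + RC (INR n))%C.
Proof.
  assert (E : RC (INR n) = ((x + RC (INR n)) + (- x))%C) by ring.
  pose proof (Cmod_triangle (x + RC (INR n)) (- x)). rewrite <- E, Cmod_opp, Cmod_R in H.
  rewrite Rabs_pos_eq in H by apply pos_INR. lra. Qed.

Lemma Qlow (u v : CC) n : 2 * (Cmod u + Cmod v) + 1 <= INR n ->
  (INR n + 1) * (INR n + 1) / 4 <= Cmod ((u + RC (INR n)) * (v + RC (INR n)))%C.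
Proof. intros H. rewrite Cmod_mult. pose proof (modlow u n). pose proof (modlow v n).
  pose proof (Cmod_ge_0 u). pose proof (Cmod_ge_0 v).
  assert ((INR n + 1)/2 <= Cmod (u + RC (INR n))%C) by lra.
  assert ((INR n + 1)/2 <= Cmod (v + RC (INR n))%C) by lra.
  pose proof (pos_INR n).
  apply Rle_trans with (((INR n + 1)/2) * ((INR n + 1)/2)); [right; field | apply Rmult_le_compat; lra]. Qed.

Lemma real_bd x : 0 <= x -> 4 * / ((x+1)*(x+1)) <= 8 * (/(x+1) - /(x+2)).
Proof. intros H.
  replace (/(x+1) - /(x+2)) with (/((x+1)*(x+2))) by (field; lra).
  replace (4 * / ((x+1)*(x+1))) with (8 * /((x+1)*(2*x+2))) by (field; lra).
  apply Rmult_le_compat_l; [lra|]. apply Rinv_le_contravar; nra. Qed.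

Lemma tele_series : ex_series (fun n => /(INR n + 1) - /(INR n + 2)).
Proof. exists 1. change (is_lim_seq (sum_n (fun n => /(INR n + 1) - /(INR n + 2))) 1).
  apply (is_lim_seq_ext (fun n => 1 - /(INR n + 2))).
  { intros n. induction n.
    - rewrite sum_O. simpl. field.
    - rewrite sum_Sn, <- IHn. rewrite S_INR. unfold plus; simpl. pose proof (pos_INR n). field; lra. }
  assert (Hi : is_lim_seq (fun n => /(INR n + 2)) 0).
  { replace (Finite 0) with (Rbar_inv p_infty) by reflexivity.
    apply (is_lim_seq_inv (fun n => INR n + 2)); [|discriminate].
    apply (is_lim_seq_ext (fun n => INR (n + 2))).
    { intros n. rewrite plus_INR. reflexivity. }
    apply (is_lim_seq_incr_n INR 2). apply is_lim_seq_INR. }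
  pose proof (is_lim_seq_minus' _ _ 1 0 (is_lim_seq_const 1) Hi) as H.
  rewrite Rminus_0_r in H. exact H. Qed.

Lemma psum_sum (a : nat -> CC) n : psum a (S n) = sum_n a n.
Proof. induction n.
  - rewrite sum_O. cbn. ring.
  - rewrite sum_Sn. cbn [psum] in *. rewrite IHn. reflexivity. Qed.

Lemma series_lim (a : nat -> CC) : ex_series a -> exists L, forall eps, eps > 0 ->
   exists N, forall n, (N <= n)%nat -> Cmod (psum a n - L)%C < eps.
Proof. intros [L HL]. exists L. intros eps He.
  destruct (proj1 (filterlim_locally_ball_norm _ _) HL (mkposreal eps He)) as [N HN].
  exists (S N). intros n Hn. destruct n; [lia|]. rewrite psum_sum. apply (HN n). lia. Qed.

Lemma t3_bound u n : nz u -> nz (RC 1 - u)%C ->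
  2 * (Cmod u + Cmod (RC 1 - u)%C) + 1 <= INR n ->
  Cmod (t3f u n) <= 8 * Cmod (u * (RC 1 - u))%C * (/(INR n + 1) - /(INR n + 2)).
Proof. intros Hu Hv H. unfold t3f. pose proof (Qlow u (RC 1 - u)%C n H) as HQ.
  pose proof (pos_INR n).
  assert (P : 0 < Cmod ((u + RC (INR n)) * (RC 1 - u + RC (INR n)))%C).
  { eapply Rlt_le_trans; [|exact HQ]. nra. }
  rewrite Cmod_div by (apply Cmod_gt_0; exact P).
  eapply Rle_trans with (Cmod (u * (RC 1 - u))%C * (4 * / ((INR n + 1)*(INR n + 1)))).
  - unfold Rdiv. apply Rmult_le_compat_l. apply Cmod_ge_0.
    replace (4 * / ((INR n + 1) * (INR n + 1))) with (/ ((INR n + 1) * (INR n + 1) / 4)) by (field; lra).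
    apply Rinv_le_contravar; [nra|exact HQ].
  - pose proof (real_bd (INR n) H0). pose proof (Cmod_ge_0 (u*(RC 1 - u))%C). nra. Qed.

Lemma arch (A : R) : exists N : nat, A <= INR N.
Proof. destruct (INR_archimed 1 A) as [N HN]; [lra|]. exists N. lra. Qed.

Lemma t3_series u : nz u -> nz (RC 1 - u)%C -> ex_series (t3f u).
Proof. intros Hu Hv.
  destruct (arch (2 * (Cmod u + Cmod (RC 1 - u)%C) + 1)) as [N0 HN0].
  apply (ex_series_incr_n _ N0).
  apply (@ex_series_le C_AbsRing C_CompleteNormedModule _ (fun k => 8 * Cmod (u * (RC 1 - u))%C *
        (/(INR (N0 + k) + 1) - /(INR (N0 + k) + 2)))).
  - intros k. apply t3_bound; auto. rewrite plus_INR. pose proof (pos_INR k). lra.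
  - apply (ex_series_ext (fun k => scal (8 * Cmod (u * (RC 1 - u))%C)
          (/(INR (N0 + k) + 1) - /(INR (N0 + k) + 2)))).
    { intros; reflexivity. }
    apply (@ex_series_scal_l R_AbsRing R_NormedModule). apply (ex_series_incr_n (fun n => /(INR n + 1) - /(INR n + 2)) N0).
    apply tele_series. Qed.

Lemma nq_small u : nz u -> nz (RC 1 - u)%C -> forall eps, eps > 0 -> exists N, forall n, (N <= n)%nat ->
  Cmod (u * (RC 1 - u) * RC (INR n) / ((u + RC (INR n)) * ((RC 1 - u) + RC (INR n))))%C < eps.
Proof. intros Hu Hv eps He.
  destruct (arch (2 * (Cmod u + Cmod (RC 1 - u)%C) + 1)) as [N0 HN0].
  destruct (arch (4 * Cmod (u * (RC 1 - u))%C / eps)) as [N1 HN1].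
  exists (N0 + N1)%nat. intros n Hn.
  assert (H : 2 * (Cmod u + Cmod (RC 1 - u)%C) + 1 <= INR n).
  { eapply Rle_trans; [exact HN0|]. apply le_INR. lia. }
  assert (H1 : INR N1 <= INR n) by (apply le_INR; lia).
  pose proof (Qlow u (RC 1 - u)%C n H) as HQ. pose proof (pos_INR n).
  assert (P : 0 < Cmod ((u + RC (INR n)) * (RC 1 - u + RC (INR n)))%C).
  { eapply Rlt_le_trans; [|exact HQ]. nra. }
  rewrite Cmod_div by (apply Cmod_gt_0; exact P).
  rewrite Cmod_mult, Cmod_R, Rabs_pos_eq by lra.
  set (M := Cmod (u * (RC 1 - u))%C) in *. pose proof (Cmod_ge_0 (u * (RC 1 - u))%C). fold M in H2.
  set (D := Cmod ((u + RC (INR n)) * (RC 1 - u + RC (INR n)))%C) in *.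
  apply Rle_lt_trans with (M * INR n * (4 / ((INR n + 1) * (INR n + 1)))).
  - unfold Rdiv at 1. apply Rmult_le_compat_l; [nra|].
    replace (4 / ((INR n + 1) * (INR n + 1))) with (/ ((INR n + 1) * (INR n + 1) / 4)) by (field; lra).
    apply Rinv_le_contravar; [nra|exact HQ].
  - apply Rle_lt_trans with (4 * M / (INR n + 1)).
    + replace (4 * M / (INR n + 1)) with (M * (INR n + 1) * (4 / ((INR n + 1) * (INR n + 1)))) by (field; lra).
      apply Rmult_le_compat_r. apply Rlt_le, Rdiv_lt_0_compat; nra. nra.
    + apply (Rmult_lt_reg_r (INR n + 1)); [lra|].
      replace (4 * M / (INR n + 1) * (INR n + 1)) with (4 * M) by (field; lra).
      assert (4 * M / eps * eps = 4 * M) by (field; lra).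
      nra. Qed.

Lemma toC_psum (f : nat -> Cx) n : toC (Cpartial f n) = psum (fun k => toC (f k)) n.
Proof. induction n; cbn [Cpartial psum]. reflexivity. rewrite toC_add, IHn. reflexivity. Qed.

Lemma psum_ext f g n : (forall k, f k = g k) -> psum f n = psum g n.
Proof. intros H; induction n; cbn [psum]. reflexivity. rewrite IHn, H. reflexivity. Qed.

Lemma final_conv (f : nat -> Cx) (s : Cx) :
  (forall eps, eps > 0 -> exists N, forall n, (N <= n)%nat ->
     Cmod (psum (fun k => toC (f k)) n - toC s)%C < eps) -> Cseries_to f s.
Proof. intros H. split; intros eps He; destruct (H eps He) as [N HN]; exists N; intros n Hn;
  unfold R_dist; specialize (HN n Hn); rewrite <- toC_psum in HN; eapply Rle_lt_trans; try exact HN;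
  pose proof (Rmax_Cmod (toC (Cpartial f n) - toC s)%C) as HM.
  - assert (E : fst (toC (Cpartial f n) - toC s)%C = Re (Cpartial f n) - Re s) by (simpl; ring).
    rewrite E in HM. eapply Rle_trans; [apply Rmax_l|exact HM].
  - assert (E : snd (toC (Cpartial f n) - toC s)%C = Im (Cpartial f n) - Im s) by (simpl; ring).
    rewrite E in HM. eapply Rle_trans; [apply Rmax_r|exact HM]. Qed.

Lemma combine_lim (S T : nat -> CC) (K L : CC) :
  (forall eps, eps > 0 -> exists N, forall n, (N <= n)%nat -> Cmod (S n - L)%C < eps) ->
  (forall eps, eps > 0 -> exists N, forall n, (N <= n)%nat -> Cmod (T n)%C < eps) ->
  forall eps, eps > 0 -> exists N, forall n, (N <= n)%nat ->
    Cmod (K * S n - K * T n - K * L)%C < eps.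
Proof. intros HS HT eps He.
  pose proof (Cmod_ge_0 K) as HK.
  set (e := eps / (2 * (Cmod K + 1))).
  assert (He' : e > 0) by (unfold e; apply Rdiv_lt_0_compat; lra).
  destruct (HS e He') as [N1 H1]. destruct (HT e He') as [N2 H2].
  exists (N1 + N2)%nat. intros n Hn.
  specialize (H1 n ltac:(lia)). specialize (H2 n ltac:(lia)).
  replace (K * S n - K * T n - K * L)%C with (K * (S n - L) + - (K * T n))%C by ring.
  eapply Rle_lt_trans. apply Cmod_triangle. rewrite Cmod_opp, !Cmod_mult.
  pose proof (Cmod_ge_0 (S n - L)%C). pose proof (Cmod_ge_0 (T n)).
  apply Rle_lt_trans with (Cmod K * (2 * e)). nra.
  unfold e. replace (Cmod K * (2 * (eps / (2 * (Cmod K + 1))))) with (eps * (Cmod K / (Cmod K + 1))) by (field; lra).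
  assert (Cmod K / (Cmod K + 1) < 1). { apply (Rmult_lt_reg_r (Cmod K + 1)); [lra|].
    replace (Cmod K / (Cmod K + 1) * (Cmod K + 1)) with (Cmod K) by (field; lra). lra. }
  nra. Qed.

Theorem mainTheorem11 (a b : Cx) :
  Re b > 0 ->
  Re (Cadd b a) > 0 ->
  Re (Csub b a) > 0 ->
  (forall n : nat,
     Cadd (RtoC (3/2)) (Cdiv a (Cmul (RtoC 2) b)) <> RtoC (- INR n)) ->
  (forall n : nat,
     Csub (RtoC (3/2)) (Cdiv a (Cmul (RtoC 2) b)) <> RtoC (- INR n)) ->
  (forall k : Z, Cdiv a b <> RtoC (IZR (2 * k + 1))) ->
  exists s4 s3 : Cx,
    pFq_sum [RtoC 2; RtoC 2;
             Cadd (RtoC (1/2)) (Cdiv a (Cmul (RtoC 2) b));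
             Csub (RtoC (1/2)) (Cdiv a (Cmul (RtoC 2) b))]
            [RtoC 1;
             Cadd (RtoC (5/2)) (Cdiv a (Cmul (RtoC 2) b));
             Csub (RtoC (5/2)) (Cdiv a (Cmul (RtoC 2) b))]
            (RtoC 1) s4 /\
    pFq_sum [RtoC 1;
             Csub (RtoC (1/2)) (Cdiv a (Cmul (RtoC 2) b));
             Cadd (RtoC (1/2)) (Cdiv a (Cmul (RtoC 2) b))]
            [Csub (RtoC (3/2)) (Cdiv a (Cmul (RtoC 2) b));
             Cadd (RtoC (3/2)) (Cdiv a (Cmul (RtoC 2) b))]
            (RtoC 1) s3 /\
    s4 = Cmul (Cdiv (Csub (Cmul (RtoC 9) (Cmul b b)) (Cmul a a))
                    (Cmul (RtoC 8) (Cmul b b)))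
              s3.
Proof.
  intros Hb _ _ H1 H2 Hodd.
  set (X := Cdiv a (Cmul (RtoC 2) b)).
  set (c := toC X).
  assert (bnz : toC b <> 0%C).
  { intro E. assert (Re b = fst (toC b)) as E' by reflexivity. rewrite E in E'. simpl in E'. lra. }
  assert (Hc : c = (toC a / (RC 2 * toC b))%C).
  { unfold c, X. rewrite toC_div, toC_mul, toC_RtoC. reflexivity. }
  assert (d2 : (2 <> 0)%R) by lra.
  set (u := (RC (1/2) - c)%C).
  assert (Hu : nz u).
  { intros [|j] E.
    - apply (Hodd 0%Z). apply toC_inj. rewrite toC_div, toC_RtoC.
      change (IZR (2 * 0 + 1)) with 1.
      transitivity (RC 2 * (RC (1/2) - (u + RC (INR 0))))%C.
      + unfold u. rewrite Hc. simpl INR. rewrite RtoC_div by exact d2. field. auto.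
      + rewrite E. rewrite RtoC_div by exact d2. field.
    - apply (H2 j). apply toC_inj. rewrite toC_sub, !toC_RtoC. fold X c.
      apply Ceq_minus. rewrite <- E. unfold u. rewrite S_INR, RtoC_plus, RtoC_opp, !RtoC_div by exact d2.
      field. }
  assert (Hw : nz (RC (1/2) + c)%C).
  { intros [|j] E.
    - apply (Hodd (-1)%Z). apply toC_inj. rewrite toC_div, toC_RtoC.
      change (IZR (2 * -1 + 1)) with (IZR (-1)).
      transitivity (RC 2 * ((RC (1/2) + c + RC (INR 0)) - RC (1/2)))%C.
      + rewrite Hc. simpl INR. rewrite RtoC_div by exact d2. field. auto.
      + rewrite E. rewrite RtoC_div by exact d2. field.
    - apply (H1 j). apply toC_inj. rewrite toC_add, !toC_RtoC. fold X c.
      apply Ceq_minus. rewrite <- E. rewrite S_INR, RtoC_plus, RtoC_opp, !RtoC_div by exact d2.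
      field. }
  assert (Hvu : (RC (1/2) + c = RC 1 - u)%C) by (unfold u; rewrite RtoC_div by exact d2; field).
  assert (Hv : nz (RC 1 - u)%C) by (rewrite <- Hvu; exact Hw).
  assert (E3 : forall n, toC (hyp_term [RtoC 1;
             Csub (RtoC (1/2)) X; Cadd (RtoC (1/2)) X]
            [Csub (RtoC (3/2)) X; Cadd (RtoC (3/2)) X] (RtoC 1) n) = t3f u n).
  { intros n. rewrite toC_hyp, !toC_prod_cons, !toC_prod_nil, !toC_sub, !toC_add, !toC_RtoC. fold c.
    rewrite (t3_form u (RC (1/2) + c)%C); auto.
    - unfold t3f. rewrite Hvu. reflexivity.
    - unfold u. rewrite !RtoC_div by exact d2. field.
    - rewrite !RtoC_div by exact d2. field. }
  assert (E4 : forall n, toC (hyp_term [RtoC 2; RtoC 2; Cadd (RtoC (1/2)) X; Csub (RtoC (1/2)) X]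
            [RtoC 1; Cadd (RtoC (5/2)) X; Csub (RtoC (5/2)) X] (RtoC 1) n) = t4f u n).
  { intros n. rewrite toC_hyp, !toC_prod_cons, !toC_prod_nil, !toC_sub, !toC_add, !toC_RtoC. fold c.
    rewrite (t4_form u (RC (1/2) + c)%C); auto.
    - unfold t4f. rewrite Hvu. reflexivity.
    - unfold u. rewrite !RtoC_div by exact d2. field.
    - rewrite !RtoC_div by exact d2. field. }
  destruct (series_lim (t3f u) (t3_series u Hu Hv)) as [L HL].
  exists (Cmul (Cdiv (Csub (Cmul (RtoC 9) (Cmul b b)) (Cmul a a)) (Cmul (RtoC 8) (Cmul b b))) (ofC L)), (ofC L).
  split; [|split; [|reflexivity]].
  - apply final_conv. intros eps He.
    assert (EK : toC (Cmul (Cdiv (Csub (Cmul (RtoC 9) (Cmul b b)) (Cmul a a)) (Cmul (RtoC 8) (Cmul b b))) (ofC L)) = (Kc u * L)%C).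
    { rewrite toC_mul, toC_ofC, toC_div, toC_sub, !toC_mul, !toC_RtoC. f_equal.
      unfold Kc, u. rewrite Hc, RtoC_div by exact d2. field. auto. }
    rewrite EK.
    destruct (combine_lim (psum (t3f u)) (fun n => u * (RC 1 - u) * RC (INR n) / ((u + RC (INR n)) * ((RC 1 - u) + RC (INR n))))%C (Kc u) L HL (nq_small u Hu Hv) eps He) as [N HN].
    exists N. intros n Hn. rewrite (psum_ext _ (t4f u) n E4), telesc by assumption. apply HN; exact Hn.
  - apply final_conv. intros eps He. destruct (HL eps He) as [N HN]. exists N. intros n Hn.
    rewrite toC_ofC, (psum_ext _ (t3f u) n E3). apply HN; exact Hn.
Qed.
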